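(* Every nontrivial totally geodesic subset of $\mathbb{H}^2\times\mathbb{R}$ is either a horizontal plane $\mathbb{H}^2\times\{r\}$ for some $r\in\mathbb{R}$, or a vertical plane $\gamma\times\mathbb{R}$ for some geodesic $\gamma$ of $\mathbb{H}^2$.
   Context: $\mathbb{H}^2\times\mathbb{R}$ carries the Riemannian product metric. A geodesic is the image of a locally isometric immersion of the whole real line. A totally geodesic subset is a nonempty subset $X$ such that any two points of $X$ are joined by a geodesic contained in $X$; it is trivial if it is a single geodesic or the whole space, and nontrivial otherwise. *)

(* Defs.v *)
From Stdlib Require Import Reals.
Open Scope R_scope.

Definition arcosh (z : R) : R := ln (z + sqrt (z * z - 1)).

Record H2 : Type := mkH2 { hx : R; hy : R; hy_pos : 0 < hy }.

(* Hyperbolic distance (Riemannian distance of the metric (dx^2+dy^2)/y^2). *)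
Definition dH (p q : H2) : R :=
  arcosh (1 + ((hx p - hx q) ^ 2 + (hy p - hy q) ^ 2) / (2 * hy p * hy q)).

Definition H2R : Type := (H2 * R)%type.

Definition dH2R (p q : H2R) : R :=
  sqrt (dH (fst p) (fst q) ^ 2 + (snd p - snd q) ^ 2).

Definition locally_isometric {X : Type} (d : X -> X -> R) (c : R -> X) : Prop :=
  forall t : R, exists eps : R, 0 < eps /\
    forall s s' : R, Rabs (s - t) < eps -> Rabs (s' - t) < eps ->
      d (c s) (c s') = Rabs (s - s').

Definition is_geodesic {X : Type} (d : X -> X -> R) (G : X -> Prop) : Prop :=
  exists c : R -> X, locally_isometric d c /\
    forall x : X, G x <-> exists t : R, c t = x.

Definition totally_geodesic {X : Type} (d : X -> X -> R) (S : X -> Prop) : Prop :=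
  (exists x, S x) /\
  forall x y : X, S x -> S y ->
    exists G : X -> Prop, is_geodesic d G /\ G x /\ G y /\ (forall z, G z -> S z).

Definition nontrivial {X : Type} (d : X -> X -> R) (S : X -> Prop) : Prop :=
  ~ is_geodesic d S /\ ~ (forall x : X, S x).

(* Main.v *)
Require Import Defs.
From Stdlib Require Import Reals Lra Psatz Classical ProofIrrelevance ClassicalEpsilon IndefiniteDescription.
Open Scope R_scope.

Definition ch (x : R) : R := (exp x + exp (- x)) / 2.
Definition sh (x : R) : R := (exp x - exp (- x)) / 2.

Lemma expo_inv x : exp (- x) = / exp x.
Proof. apply exp_Ropp. Qed.

Lemma ch_sh x : ch x * ch x - sh x * sh x = 1.
Proof.
  unfold ch, sh. rewrite expo_inv. pose proof (exp_pos x). field. lra.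
Qed.

Lemma ch_add a b : ch (a + b) = ch a * ch b + sh a * sh b.
Proof.
  unfold ch, sh. rewrite Ropp_plus_distr, !exp_plus, !expo_inv.
  pose proof (exp_pos a). pose proof (exp_pos b). field. lra.
Qed.

Lemma sh_add a b : sh (a + b) = sh a * ch b + ch a * sh b.
Proof.
  unfold ch, sh. rewrite Ropp_plus_distr, !exp_plus, !expo_inv.
  pose proof (exp_pos a). pose proof (exp_pos b). field. lra.
Qed.

Lemma ch_opp a : ch (- a) = ch a.
Proof. unfold ch. rewrite Ropp_involutive. lra. Qed.
Lemma sh_opp a : sh (- a) = - sh a.
Proof. unfold sh. rewrite Ropp_involutive. lra. Qed.

Lemma ch_sub a b : ch (a - b) = ch a * ch b - sh a * sh b.
Proof. unfold Rminus. rewrite ch_add, ch_opp, sh_opp. ring. Qed.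
Lemma sh_sub a b : sh (a - b) = sh a * ch b - ch a * sh b.
Proof. unfold Rminus. rewrite sh_add, ch_opp, sh_opp. ring. Qed.

Lemma ch0 : ch 0 = 1.
Proof. unfold ch. rewrite Ropp_0, exp_0. lra. Qed.
Lemma sh0 : sh 0 = 0.
Proof. unfold sh. rewrite Ropp_0, exp_0. lra. Qed.

Lemma ch_ge1 x : 1 <= ch x.
Proof.
  unfold ch. rewrite expo_inv. pose proof (exp_pos x) as H.
  set (E := exp x) in *.
  apply Rmult_le_reg_r with (2 * E). lra.
  replace ((E + / E) / 2 * (2 * E)) with (E * E + 1) by (field; lra).
  pose proof (pow2_ge_0 (E - 1)). nra.
Qed.

Lemma sh_nonneg x : 0 <= x -> 0 <= sh x.
Proof.
  intro H. unfold sh. destruct (Req_dec x 0) as [->|Hn].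
  - rewrite Ropp_0. lra.
  - pose proof (exp_increasing (- x) x ltac:(lra)). lra.
Qed.

Lemma ch_plus_sh x : ch x + sh x = exp x.
Proof. unfold ch, sh. lra. Qed.
Lemma ch_minus_sh x : ch x - sh x = exp (- x).
Proof. unfold ch, sh. lra. Qed.

Lemma arcosh_ch v : arcosh (ch v) = Rabs v.
Proof.
  unfold arcosh.
  replace (ch v * ch v - 1) with (sh v * sh v) by (pose proof (ch_sh v); lra).
  destruct (Rle_dec 0 v) as [Hv|Hv].
  - rewrite sqrt_square by (apply sh_nonneg; lra).
    rewrite ch_plus_sh, ln_exp, Rabs_right; lra.
  - replace (sh v * sh v) with (sh (-v) * sh (-v)) by (rewrite sh_opp; ring).
    rewrite sqrt_square by (apply sh_nonneg; lra).
    rewrite sh_opp. replace (ch v + - sh v) with (ch v - sh v) by ring.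
    rewrite ch_minus_sh, ln_exp, Rabs_left; lra.
Qed.

Lemma arcosh_aux z : 1 <= z -> 0 < z + sqrt (z * z - 1).
Proof. intro. pose proof (sqrt_pos (z * z - 1)). lra. Qed.

Lemma ch_arcosh z : 1 <= z -> ch (arcosh z) = z /\ sh (arcosh z) = sqrt (z * z - 1).
Proof.
  intro Hz. unfold ch, sh, arcosh. rewrite expo_inv.
  pose proof (arcosh_aux z Hz) as Hp. rewrite exp_ln by lra.
  assert (Hs := sqrt_sqrt (z * z - 1) ltac:(nra)).
  set (s := sqrt (z * z - 1)) in *.
  assert (Hs0 : 0 <= s) by apply sqrt_pos.
  replace (/ (z + s)) with (z - s).
  - split; field.
  - field_simplify_eq; [nra| lra].
Qed.

Lemma arcosh_nonneg z : 1 <= z -> 0 <= arcosh z.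
Proof.
  intro Hz. unfold arcosh. rewrite <- ln_1.
  pose proof (sqrt_pos (z * z - 1)). destruct (Req_dec (z + sqrt (z * z - 1)) 1) as [E|E].
  - rewrite E. lra.
  - left. apply ln_increasing; lra.
Qed.

Lemma arcosh_mono a b : 1 <= a -> a <= b -> arcosh a <= arcosh b.
Proof.
  intros Ha Hab. unfold arcosh.
  assert (Hs : sqrt (a * a - 1) <= sqrt (b * b - 1)) by (apply sqrt_le_1_alt; nra).
  pose proof (arcosh_aux a Ha).
  destruct (Req_dec (a + sqrt (a * a - 1)) (b + sqrt (b * b - 1))) as [E|E].
  - rewrite E. lra.
  - left. apply ln_increasing; lra.
Qed.

Lemma arcosh_zero z : 1 <= z -> arcosh z = 0 -> z = 1.
Proof.
  intros Hz H. destruct (ch_arcosh z Hz) as [H1 _]. rewrite H, ch0 in H1. lra.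
Qed.

Record V3 : Type := mkV { c0 : R; c1 : R; c2 : R }.

Definition mi (u v : V3) : R := - c0 u * c0 v + c1 u * c1 v + c2 u * c2 v.
Definition det3 (u v w : V3) : R :=
  c0 u * (c1 v * c2 w - c2 v * c1 w) - c1 u * (c0 v * c2 w - c2 v * c0 w)
  + c2 u * (c0 v * c1 w - c1 v * c0 w).
Definition vadd (u v : V3) : V3 := mkV (c0 u + c0 v) (c1 u + c1 v) (c2 u + c2 v).
Definition vsc (a : R) (u : V3) : V3 := mkV (a * c0 u) (a * c1 u) (a * c2 u).

Lemma V3_ext u v : c0 u = c0 v -> c1 u = c1 v -> c2 u = c2 v -> u = v.
Proof. destruct u, v; simpl; intros; subst; reflexivity. Qed.

Lemma mi_sym u v : mi u v = mi v u.
Proof. unfold mi; ring. Qed.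
Lemma mi_addl u v w : mi (vadd u v) w = mi u w + mi v w.
Proof. unfold mi, vadd; simpl; ring. Qed.
Lemma mi_addr u v w : mi w (vadd u v) = mi w u + mi w v.
Proof. unfold mi, vadd; simpl; ring. Qed.
Lemma mi_scl a u w : mi (vsc a u) w = a * mi u w.
Proof. unfold mi, vsc; simpl; ring. Qed.
Lemma mi_scr a u w : mi w (vsc a u) = a * mi w u.
Proof. unfold mi, vsc; simpl; ring. Qed.

Lemma gram_identity a b c :
  det3 a b c * det3 a b c =
  - (mi a a * mi b b * mi c c + 2 * mi a b * mi b c * mi a c
     - mi a a * mi b c * mi b c - mi b b * mi a c * mi a c - mi c c * mi a b * mi a b).
Proof. unfold det3, mi; ring. Qed.

Lemma null_orth u w : mi u u < 0 -> mi w u = 0 -> mi w w = 0 -> w = mkV 0 0 0.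
Proof.
  unfold mi. destruct u as [u0 u1 u2], w as [w0 w1 w2]; simpl. intros H1 H2 H3.
  assert (E1 : w0 * u0 = w1 * u1 + w2 * u2) by lra.
  assert (E2 : w0 * w0 = w1 * w1 + w2 * w2) by lra.
  assert (CS : (w1 * u1 + w2 * u2) * (w1 * u1 + w2 * u2) <= (w1*w1 + w2*w2) * (u1*u1+u2*u2))
    by (pose proof (pow2_ge_0 (w1 * u2 - w2 * u1)); nra).
  rewrite <- E1, <- E2 in CS.
  assert (Hw : w1 * w1 + w2 * w2 <= 0).
  { replace ((w0 * u0) * (w0 * u0)) with ((w0 * w0) * (u0 * u0)) in CS by ring.
    rewrite E2 in CS. nra. }
  assert (w1 = 0) by nra. assert (w2 = 0) by nra. subst.
  assert (w0 = 0) by nra. subst. reflexivity.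
Qed.

Lemma future_lemma v p : mi v v < 0 -> mi p p < 0 -> 0 < c0 p -> mi v p < 0 -> 0 < c0 v.
Proof.
  unfold mi. destruct v as [v0 v1 v2], p as [p0 p1 p2]; simpl. intros H1 H2 H3 H4.
  destruct (Rlt_dec 0 v0) as [h|h]; auto. exfalso.
  assert (CS : (v1 * p1 + v2 * p2) * (v1 * p1 + v2 * p2) <= (v1*v1 + v2*v2) * (p1*p1+p2*p2))
    by (pose proof (pow2_ge_0 (v1 * p2 - v2 * p1)); nra).
  assert (A : v1 * p1 + v2 * p2 < v0 * p0) by lra.
  assert (B : v0 * p0 <= 0) by nra.
  assert (C : (v0 * p0) * (v0 * p0) < (v1 * p1 + v2 * p2) * (v1 * p1 + v2 * p2)) by nra.
  assert (D : (v1*v1 + v2*v2) * (p1*p1+p2*p2) < (v0*v0)*(p0*p0)).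
  { assert (0 <= v1*v1+v2*v2) by nra. assert (0 <= p1*p1+p2*p2) by nra.
    assert (v1*v1+v2*v2 < v0*v0) by lra. assert (p1*p1+p2*p2 < p0*p0) by lra.
    destruct (Req_dec (v1*v1+v2*v2) 0) as [E|E].
    - rewrite E. assert (0 < v0 * v0) by nra. assert (0 < p0 * p0) by nra. nra.
    - apply Rle_lt_trans with ((v1*v1 + v2*v2) * (p0*p0)). nra. nra. }
  nra.
Qed.

(* the hyperboloid embedding *)
Definition phi (p : H2) : V3 :=
  mkV ((hx p * hx p + hy p * hy p + 1) / (2 * hy p))
      ((hx p * hx p + hy p * hy p - 1) / (2 * hy p))
      (hx p / hy p).

Definition Kf (p q : H2) : R := - mi (phi p) (phi q).

Lemma hy_ne p : hy p <> 0.
Proof. pose proof (hy_pos p). lra. Qed.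

Lemma pos2 p q : 0 < 2 * hy p * hy q.
Proof. pose proof (hy_pos p). pose proof (hy_pos q). apply Rmult_lt_0_compat; [lra|auto]. Qed.

Lemma Kf_formula p q :
  Kf p q = 1 + ((hx p - hx q) ^ 2 + (hy p - hy q) ^ 2) / (2 * hy p * hy q).
Proof.
  unfold Kf, mi, phi; simpl. pose proof (hy_pos p). pose proof (hy_pos q).
  field. split; lra.
Qed.

Lemma dH_Kf p q : dH p q = arcosh (Kf p q).
Proof. unfold dH. rewrite Kf_formula. reflexivity. Qed.

Lemma Kf_ge1 p q : 1 <= Kf p q.
Proof.
  rewrite Kf_formula. pose proof (hy_pos p). pose proof (hy_pos q).
  assert (0 <= ((hx p - hx q) ^ 2 + (hy p - hy q) ^ 2) / (2 * hy p * hy q)).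
  { unfold Rdiv; apply Rmult_le_pos; [pose proof (pow2_ge_0 (hx p - hx q)); pose proof (pow2_ge_0 (hy p - hy q)); lra| left; apply Rinv_0_lt_compat; apply pos2]. }
  lra.
Qed.

Lemma Kf_sym p q : Kf p q = Kf q p.
Proof. unfold Kf. rewrite mi_sym. reflexivity. Qed.

Lemma mi_phi p : mi (phi p) (phi p) = -1.
Proof. unfold mi, phi; simpl. pose proof (hy_pos p). field. lra. Qed.

Lemma phi0_pos p : 0 < c0 (phi p).
Proof.
  unfold phi; simpl. pose proof (hy_pos p). apply Rdiv_lt_0_compat; nra.
Qed.

Lemma dH_sym p q : dH p q = dH q p.
Proof. rewrite !dH_Kf, Kf_sym. reflexivity. Qed.

Lemma dH_nonneg p q : 0 <= dH p q.
Proof. rewrite dH_Kf. apply arcosh_nonneg, Kf_ge1. Qed.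

Lemma ch_dH p q : ch (dH p q) = Kf p q.
Proof. rewrite dH_Kf. apply ch_arcosh, Kf_ge1. Qed.

Lemma sh_dH p q : sh (dH p q) = sqrt (Kf p q * Kf p q - 1).
Proof. rewrite dH_Kf. apply ch_arcosh, Kf_ge1. Qed.

Lemma H2_ext p q : hx p = hx q -> hy p = hy q -> p = q.
Proof.
  destruct p as [a b Hb], q as [c d Hd]; simpl; intros; subst.
  f_equal. apply proof_irrelevance.
Qed.

Lemma Kf_self p : Kf p p = 1.
Proof. unfold Kf. rewrite mi_phi. ring. Qed.

Lemma dH_self p : dH p p = 0.
Proof.
  rewrite dH_Kf, Kf_self. unfold arcosh.
  replace (1 * 1 - 1) with 0 by ring. rewrite sqrt_0, Rplus_0_r. apply ln_1.
Qed.

Lemma sq0 a b : a * a + b * b = 0 -> a = 0.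
Proof. intros. destruct (Req_dec a 0); auto. assert (0 < a * a). { destruct (Rlt_dec 0 a); [nra|]. assert (a < 0) by lra. nra. } nra. Qed.

Lemma dH_zero p q : dH p q = 0 -> p = q.
Proof.
  intro H. rewrite dH_Kf in H. apply arcosh_zero in H; [|apply Kf_ge1].
  rewrite Kf_formula in H. pose proof (hy_pos p). pose proof (hy_pos q).
  assert (E : ((hx p - hx q) ^ 2 + (hy p - hy q) ^ 2) = 0).
  { assert (((hx p - hx q) ^ 2 + (hy p - hy q) ^ 2) / (2 * hy p * hy q) = 0) by lra.
    apply Rmult_integral in H2. destruct H2 as [H2|H2]; auto.
    exfalso. pose proof (pos2 p q).
    pose proof (Rinv_0_lt_compat _ H3). lra. }
  clear H. simpl in E. rewrite !Rmult_1_r in E.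
  apply H2_ext; [apply Rminus_diag_uniq; eapply sq0; exact E|].
  apply Rminus_diag_uniq; eapply sq0; rewrite Rplus_comm; exact E.
Qed.

Definition posify (y : R) : R := if Rlt_dec 0 y then y else 1.
Lemma posify_pos y : 0 < posify y.
Proof. unfold posify. destruct (Rlt_dec 0 y); lra. Qed.

Definition psi (v : V3) : H2 :=
  mkH2 (c2 v / (c0 v - c1 v)) (posify (/ (c0 v - c1 v))) (posify_pos _).

Lemma psi_phi p : psi (phi p) = p.
Proof.
  pose proof (hy_pos p).
  assert (E : c0 (phi p) - c1 (phi p) = / hy p).
  { unfold phi; simpl. field. lra. }
  apply H2_ext; unfold psi; cbn [hx hy]; rewrite E.
  - unfold phi; simpl. field. lra.
  - rewrite Rinv_inv. unfold posify. destruct (Rlt_dec 0 (hy p)); lra.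
Qed.

Lemma unit_future_c0c1 v : mi v v = -1 -> 0 < c0 v -> 0 < c0 v - c1 v.
Proof.
  unfold mi. destruct v as [a b c]; simpl. intros.
  assert (b * b < a * a) by nra. nra.
Qed.

Lemma phi_psi v : mi v v = -1 -> 0 < c0 v -> phi (psi v) = v.
Proof.
  intros H1 H2. pose proof (unit_future_c0c1 v H1 H2) as Hd.
  assert (Ey : hy (psi v) = / (c0 v - c1 v)).
  { simpl. unfold posify. destruct (Rlt_dec 0 (/ (c0 v - c1 v))) as [|n]; auto.
    exfalso. apply n. apply Rinv_0_lt_compat. lra. }
  assert (Ex : hx (psi v) = c2 v / (c0 v - c1 v)) by reflexivity.
  unfold phi. rewrite Ex, Ey.
  unfold mi in H1. destruct v as [a b c]; simpl in *.
  apply V3_ext; simpl.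
  - field_simplify_eq; [nra| lra].
  - field_simplify_eq; [nra| lra].
  - field. lra.
Qed.

Lemma phi_inj p q : phi p = phi q -> p = q.
Proof. intro H. rewrite <- (psi_phi p), <- (psi_phi q), H. reflexivity. Qed.

Definition Uv (p r : H2) : V3 :=
  vsc (/ sh (dH p r)) (vadd (phi r) (vsc (- ch (dH p r)) (phi p))).
Definition Vg (p r : H2) (u : R) : V3 :=
  vadd (vsc (ch u) (phi p)) (vsc (sh u) (Uv p r)).
Definition gam (p r : H2) (u : R) : H2 := psi (Vg p r u).

Lemma sh_pos d : 0 < d -> 0 < sh d.
Proof. intro. unfold sh. pose proof (exp_increasing (- d) d ltac:(lra)). lra. Qed.

Lemma ch_abs u : ch (Rabs u) = ch u.
Proof. destruct (Rle_dec 0 u). rewrite Rabs_right; lra. rewrite Rabs_left, ch_opp; lra. Qed.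

Lemma mi_PR p r : mi (phi p) (phi r) = - ch (dH p r).
Proof. rewrite ch_dH. unfold Kf. ring. Qed.

Lemma vsub0 a b : vadd a (vsc (-1) b) = mkV 0 0 0 -> a = b.
Proof.
  destruct a as [a0 a1 a2], b as [b0 b1 b2]. unfold vadd, vsc; simpl. intro H.
  injection H. intros. apply V3_ext; simpl; lra.
Qed.

Section G.
Variables p r : H2.
Hypothesis Hd : 0 < dH p r.

Let s := sh (dH p r).
Let c := ch (dH p r).
Lemma s_pos : 0 < sh (dH p r).
Proof. apply sh_pos; auto. Qed.

Lemma mi_PU : mi (phi p) (Uv p r) = 0.
Proof.
  pose proof s_pos.
  unfold Uv. rewrite mi_scr, mi_addr, mi_scr, mi_phi, mi_PR. field. lra.
Qed.

Lemma mi_UU : mi (Uv p r) (Uv p r) = 1.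
Proof.
  pose proof s_pos. pose proof (ch_sh (dH p r)).
  unfold Uv. rewrite mi_scl, mi_scr, !mi_addl, !mi_addr, !mi_scl, !mi_scr, !mi_phi.
  rewrite (mi_sym (phi r) (phi p)), !mi_PR.
  field_simplify_eq; [|lra]. nra.
Qed.

Lemma mi_VV u u' : mi (Vg p r u) (Vg p r u') = - ch (u - u').
Proof.
  pose proof mi_PU. pose proof mi_UU.
  unfold Vg. rewrite !mi_addl, !mi_addr, !mi_scl, !mi_scr, mi_phi.
  rewrite (mi_sym (Uv p r) (phi p)), H, H0, ch_sub. ring.
Qed.

Lemma mi_VP u : mi (Vg p r u) (phi p) = - ch u.
Proof.
  pose proof mi_PU.
  unfold Vg. rewrite !mi_addl, !mi_scl, mi_phi, (mi_sym (Uv p r) (phi p)), H. ring.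
Qed.

Lemma Vg_unit u : mi (Vg p r u) (Vg p r u) = -1.
Proof. rewrite mi_VV. replace (u - u) with 0 by ring. rewrite ch0. ring. Qed.

Lemma Vg_future u : 0 < c0 (Vg p r u).
Proof.
  apply (future_lemma _ (phi p)).
  - rewrite Vg_unit. lra.
  - rewrite mi_phi. lra.
  - apply phi0_pos.
  - rewrite mi_VP. pose proof (ch_ge1 u). lra.
Qed.

Lemma phi_gam u : phi (gam p r u) = Vg p r u.
Proof. unfold gam. apply phi_psi. apply Vg_unit. apply Vg_future. Qed.

Lemma Kf_gam u u' : Kf (gam p r u) (gam p r u') = ch (u - u').
Proof. unfold Kf. rewrite !phi_gam, mi_VV. ring. Qed.

Lemma dH_gam u u' : dH (gam p r u) (gam p r u') = Rabs (u - u').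
Proof. rewrite dH_Kf, Kf_gam. apply arcosh_ch. Qed.

Lemma core_H2 q u : dH p q = Rabs u -> dH q r = Rabs (u - dH p r) -> q = gam p r u.
Proof.
  intros E1 E2.
  assert (K1 : Kf p q = ch u) by (rewrite <- ch_dH, E1; apply ch_abs).
  assert (K2 : Kf q r = ch (u - dH p r)) by (rewrite <- ch_dH, E2; apply ch_abs).
  pose proof s_pos. pose proof mi_PU. pose proof mi_UU.
  set (Q := phi q). set (V := Vg p r u).
  assert (QP : mi Q (phi p) = - ch u) by (unfold Q; rewrite mi_sym; unfold Kf in K1; lra).
  assert (QR : mi Q (phi r) = - ch (u - dH p r)) by (unfold Q; unfold Kf in K2; lra).
  assert (QU : mi Q (Uv p r) = sh u).
  { unfold Uv. rewrite mi_scr, mi_addr, mi_scr, QP, QR, ch_sub. field. lra. }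
  assert (QV : mi Q V = -1).
  { unfold V, Vg. rewrite mi_addr, !mi_scr, QP, QU. pose proof (ch_sh u). lra. }
  assert (VV : mi V V = -1) by apply Vg_unit.
  assert (QQ : mi Q Q = -1) by apply mi_phi.
  set (W := vadd Q (vsc (-1) V)).
  assert (W0 : W = mkV 0 0 0).
  { apply (null_orth V).
    - lra.
    - unfold W. rewrite mi_addl, mi_scl. lra.
    - unfold W. rewrite mi_addl, !mi_addr, !mi_scl, !mi_scr, (mi_sym V Q). lra. }
  assert (QeV : Q = V).
  { apply vsub0. exact W0. }
  unfold gam. fold V. rewrite <- QeV. unfold Q. symmetry. apply psi_phi.
Qed.

End G.

Lemma gam0 p r : gam p r 0 = p.
Proof.
  unfold gam. replace (Vg p r 0) with (phi p). apply psi_phi.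
  unfold Vg, vadd, vsc. rewrite ch0, sh0. apply V3_ext; simpl; ring.
Qed.

Lemma sqrt_ge_of_sq x y : 0 <= y -> x * x <= y -> x <= sqrt y.
Proof.
  intros Hy H. destruct (Rle_dec x 0). pose proof (sqrt_pos y). lra.
  rewrite <- (sqrt_square x) by lra. apply sqrt_le_1_alt. lra.
Qed.

Lemma dH_triangle p q r : dH p r <= dH p q + dH q r.
Proof.
  set (a := dH p q). set (b := dH q r).
  assert (Ha : 0 <= a) by apply dH_nonneg. assert (Hb : 0 <= b) by apply dH_nonneg.
  set (al := Kf p q). set (be := Kf q r). set (ga := Kf p r).
  assert (A1 : 1 <= al) by apply Kf_ge1. assert (B1 : 1 <= be) by apply Kf_ge1.
  assert (G1 : 1 <= ga) by apply Kf_ge1.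
  pose proof (gram_identity (phi p) (phi q) (phi r)) as GI.
  rewrite !mi_phi in GI.
  replace (mi (phi p) (phi q)) with (- al) in GI by (unfold al, Kf; ring).
  replace (mi (phi q) (phi r)) with (- be) in GI by (unfold be, Kf; ring).
  replace (mi (phi p) (phi r)) with (- ga) in GI by (unfold ga, Kf; ring).
  assert (Ineq : (ga - al * be) * (ga - al * be) <= (al * al - 1) * (be * be - 1)).
  { set (d := det3 (phi p) (phi q) (phi r)) in *.
    assert (X : (al*al-1)*(be*be-1) - (ga - al*be)*(ga-al*be) = d*d) by (rewrite GI; ring).
    pose proof (Rle_0_sqr d) as Hdd. unfold Rsqr in Hdd. lra. }
  assert (Hs : ga - al * be <= sqrt (al * al - 1) * sqrt (be * be - 1)).
  { assert (0 <= al*al-1) by (clear - A1; nra). assert (0 <= be*be-1) by (clear - B1; nra).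
    rewrite <- sqrt_mult by auto. apply sqrt_ge_of_sq. clear - H H0; nra. auto. }
  assert (Ch : ch (a + b) = al * be + sqrt (al * al - 1) * sqrt (be * be - 1)).
  { rewrite ch_add. unfold a, b. rewrite !ch_dH, !sh_dH. reflexivity. }
  rewrite dH_Kf. fold ga.
  replace (a + b) with (arcosh (ch (a + b))).
  - apply arcosh_mono; auto. lra.
  - rewrite arcosh_ch. apply Rabs_right. lra.
Qed.

Definition col (p r q : H2) : Prop := det3 (phi p) (phi r) (phi q) = 0.

Lemma det_lin a b x y : det3 a b (vadd (vsc x a) (vsc y b)) = 0.
Proof. unfold det3, vadd, vsc; simpl; ring. Qed.
Lemma det_perm1 a b c : det3 b c a = det3 a b c.
Proof. unfold det3; ring. Qed.
Lemma det_swap a b c : det3 b a c = - det3 a b c.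
Proof. unfold det3; ring. Qed.
Lemma det_swap23 a b c : det3 a c b = - det3 a b c.
Proof. unfold det3; ring. Qed.
Lemma det_rep a b : det3 a b b = 0.
Proof. unfold det3; ring. Qed.
Lemma det_rep1 a b : det3 a a b = 0.
Proof. unfold det3; ring. Qed.
Lemma det_span a b x1 y1 x2 y2 w :
  det3 (vadd (vsc x1 a) (vsc y1 b)) (vadd (vsc x2 a) (vsc y2 b)) w
  = (x1 * y2 - y1 * x2) * det3 a b w.
Proof. unfold det3, vadd, vsc; simpl; ring. Qed.
Lemma det_span3 a b x1 y1 x2 y2 x3 y3 :
  det3 (vadd (vsc x1 a) (vsc y1 b)) (vadd (vsc x2 a) (vsc y2 b)) (vadd (vsc x3 a) (vsc y3 b)) = 0.
Proof. unfold det3, vadd, vsc; simpl; ring. Qed.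
Lemma det_sc3 a b c k : det3 a b (vsc k c) = k * det3 a b c.
Proof. unfold det3, vsc; simpl; ring. Qed.
Lemma det_add3 a b c d : det3 a b (vadd c d) = det3 a b c + det3 a b d.
Proof. unfold det3, vadd; simpl; ring. Qed.

Lemma col_perm1 p r q : col p r q -> col r q p.
Proof. unfold col. intro H. rewrite det_perm1. auto. Qed.
Lemma col_swap p r q : col p r q -> col r p q.
Proof. unfold col. intro H. rewrite det_swap. lra. Qed.
Lemma col_swap23 p r q : col p r q -> col p q r.
Proof. unfold col. intro H. rewrite det_swap23. lra. Qed.

Lemma dH_pos p r : p <> r -> 0 < dH p r.
Proof.
  intro H. destruct (dH_nonneg p r) as [h|h]; auto. exfalso. apply H. apply dH_zero. auto.
Qed.

Lemma R_in_PU p r : 0 < dH p r ->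
  phi r = vadd (vsc (ch (dH p r)) (phi p)) (vsc (sh (dH p r)) (Uv p r)).
Proof.
  intro Hd. pose proof (s_pos p r Hd). unfold Uv, vadd, vsc.
  apply V3_ext; simpl; field; repeat split; try apply hy_ne; lra.
Qed.

Lemma col_PU p r w : 0 < dH p r ->
  (col p r w <-> det3 (phi p) (Uv p r) (phi w) = 0).
Proof.
  intro Hd. pose proof (s_pos p r Hd). unfold col.
  rewrite (R_in_PU p r Hd).
  replace (phi p) with (vadd (vsc 1 (phi p)) (vsc 0 (Uv p r))) at 1
    by (unfold vadd, vsc; apply V3_ext; simpl; ring).
  rewrite det_span. split; intro E.
  - replace (1 * sh (dH p r) - 0 * ch (dH p r)) with (sh (dH p r)) in E by ring.
    apply Rmult_integral in E. destruct E; [lra|auto].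
  - rewrite E. ring.
Qed.

Lemma phi_gam_PU p r u : 0 < dH p r ->
  phi (gam p r u) = vadd (vsc (ch u) (phi p)) (vsc (sh u) (Uv p r)).
Proof. intro Hd. rewrite phi_gam; auto. Qed.

Lemma col_gam p r u : col p r (gam p r u).
Proof.
  destruct (Req_dec (dH p r) 0) as [E|E].
  - apply dH_zero in E. subst. unfold col. apply det_rep1.
  - assert (Hd : 0 < dH p r) by (pose proof (dH_nonneg p r); lra).
    apply col_PU; auto. rewrite phi_gam_PU; auto. apply det_lin.
Qed.

Definition arsinh (b : R) : R := ln (b + sqrt (b * b + 1)).

Lemma arsinh_spec b : sh (arsinh b) = b /\ ch (arsinh b) = sqrt (b * b + 1).
Proof.
  set (S := sqrt (b * b + 1)).
  assert (HS : S * S = b * b + 1) by (apply sqrt_sqrt; nra).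
  assert (HS0 : 0 <= S) by apply sqrt_pos.
  assert (Hp : 0 < b + S).
  { destruct (Rle_dec 0 b). assert (0 < S) by (clear -HS HS0; nra). lra.
    assert (b * b < S * S) by lra. clear -HS0 H n. nra. }
  unfold sh, ch, arsinh. fold S. rewrite expo_inv, exp_ln by lra.
  replace (/ (b + S)) with (S - b).
  - split; field.
  - field_simplify_eq; [clear -HS; nra | lra].
Qed.

Lemma onto p r q : p <> r -> col p r q -> exists u, q = gam p r u.
Proof.
  intros Hpr Hc. pose proof (dH_pos p r Hpr) as Hd.
  pose proof (mi_PU p r Hd) as PU. pose proof (mi_UU p r Hd) as UU.
  apply (col_PU p r q Hd) in Hc.
  set (P := phi p) in *. set (U := Uv p r) in *. set (Q := phi q) in *.
  set (be := mi Q U). set (m := mi Q P).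
  set (W := vadd Q (vadd (vsc m P) (vsc (- be) U))).
  assert (PP : mi P P = -1) by apply mi_phi.
  assert (QQ : mi Q Q = -1) by apply mi_phi.
  assert (WP : mi W P = 0).
  { unfold W. rewrite !mi_addl, !mi_scl, PP, (mi_sym U P), PU. unfold m. ring. }
  assert (WU : mi W U = 0).
  { unfold W. rewrite !mi_addl, !mi_scl, PU, UU. unfold be. ring. }
  assert (DW : det3 P U W = 0).
  { unfold W. rewrite !det_add3, !det_sc3, det_rep, Hc.
    replace (det3 P U P) with 0 by (unfold det3; ring). ring. }
  pose proof (gram_identity P U W) as GI.
  rewrite DW, PP, UU, PU, (mi_sym P W), WP, (mi_sym U W), WU in GI.
  assert (WW : mi W W = 0) by lra.
  assert (W0 : W = mkV 0 0 0) by (apply (null_orth P); lra).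
  assert (QE : Q = vadd (vsc (- m) P) (vsc be U)).
  { unfold W in W0. destruct Q as [q0 q1 q2], P as [p0 p1 p2], U as [u0 u1 u2].
    unfold vadd, vsc in *; simpl in *. injection W0; intros. apply V3_ext; simpl; lra. }
  assert (Hm : - m = sqrt (be * be + 1)).
  { assert (QQ' : mi Q Q = - (m * m) + be * be).
    { rewrite QE at 1. rewrite !mi_addl, !mi_scl. rewrite QE.
      rewrite !mi_addr, !mi_scr, PP, UU, PU, (mi_sym U P), PU. ring. }
    assert (Hm1 : 1 <= - m) by (unfold m, Q, P; rewrite mi_sym; pose proof (Kf_ge1 p q); unfold Kf in H; lra).
    rewrite <- (sqrt_square (- m)) by lra. f_equal. lra. }
  destruct (arsinh_spec be) as [S1 C1].
  exists (arsinh be).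
  unfold gam, Vg. fold P U. rewrite S1, C1, <- Hm, <- QE. unfold Q. symmetry. apply psi_phi.
Qed.

Lemma same_line p r q1 q2 w : p <> r -> col p r q1 -> col p r q2 -> q1 <> q2 ->
  (col q1 q2 w <-> col p r w).
Proof.
  intros Hpr C1 C2 Hq.
  pose proof (dH_pos p r Hpr) as Hd.
  destruct (onto p r q1 Hpr C1) as [u1 ->]. destruct (onto p r q2 Hpr C2) as [u2 ->].
  rewrite (col_PU p r w Hd). unfold col. rewrite !phi_gam_PU; auto.
  rewrite det_span. replace (ch u1 * sh u2 - sh u1 * ch u2) with (sh (u2 - u1)) by (rewrite sh_sub; ring).
  assert (sh (u2 - u1) <> 0).
  { intro E. apply Hq. destruct (Rlt_dec u1 u2).
    - pose proof (sh_pos (u2 - u1) ltac:(lra)). lra.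
    - destruct (Req_dec u1 u2). subst. auto.
      pose proof (sh_pos (u1 - u2) ltac:(lra)). rewrite <- (Ropp_minus_distr u1 u2), sh_opp in E. lra. }
  split; intro E. apply Rmult_integral in E. destruct E; [contradiction|auto]. rewrite E. ring.
Qed.

Lemma three_on_line p r a b c : p <> r -> col p r a -> col p r b -> col p r c -> col a b c.
Proof.
  intros Hpr Ca Cb Cc. pose proof (dH_pos p r Hpr) as Hd.
  destruct (onto p r a Hpr Ca) as [u1 ->]. destruct (onto p r b Hpr Cb) as [u2 ->].
  destruct (onto p r c Hpr Cc) as [u3 ->].
  unfold col. rewrite !phi_gam_PU; auto. apply det_span3.
Qed.

Definition lclosed (T : H2 -> Prop) : Prop :=
  forall p r q, T p -> T r -> p <> r -> col p r q -> T q.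

Lemma unit_prop a z al : phi z = vsc al (phi a) -> z = a.
Proof.
  intro E.
  assert (M : mi (phi z) (phi z) = al * al * mi (phi a) (phi a)).
  { rewrite E, mi_scl, mi_scr. ring. }
  rewrite !mi_phi in M.
  assert (C : c0 (phi z) = al * c0 (phi a)) by (rewrite E; reflexivity).
  pose proof (phi0_pos z). pose proof (phi0_pos a).
  assert (al = 1).
  { assert (0 < al). { destruct (Rlt_dec 0 al); auto. exfalso. clear -C H H0 n. nra. }
    clear -M H1. nra. }
  subst. apply phi_inj. rewrite E. unfold vsc. destruct (phi a); apply V3_ext; simpl; ring.
Qed.

Lemma vertex T a b c z al be ga :
  lclosed T -> T a -> T b -> T c ->
  det3 (phi a) (phi b) (phi c) <> 0 ->
  phi z = vadd (vsc al (phi a)) (vadd (vsc be (phi b)) (vsc ga (phi c))) ->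
  0 <= be * ga -> be + ga <> 0 -> T z.
Proof.
  intros HT Ta Tb Tc Hdet Ez Hbg Hs.
  set (A := phi a) in *. set (B := phi b) in *. set (C := phi c) in *.
  set (sg := if Rlt_dec 0 (be + ga) then 1 else -1).
  assert (Hsg : sg * sg = 1) by (unfold sg; destruct (Rlt_dec 0 (be + ga)); ring).
  assert (Hsb : 0 <= sg * be /\ 0 <= sg * ga /\ 0 < sg * (be + ga)).
  { unfold sg; destruct (Rlt_dec 0 (be + ga)).
    - split; [|split]; clear -Hbg r; nra.
    - assert (be + ga < 0) by lra. split; [|split]; clear -Hbg H; nra. }
  destruct Hsb as [Hb [Hg Hbg']].
  set (X := vsc sg (vadd (vsc be B) (vsc ga C))).
  assert (BB : mi B B = -1) by apply mi_phi. assert (CC : mi C C = -1) by apply mi_phi.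
  assert (BC : mi B C <= -1) by (unfold B, C; pose proof (Kf_ge1 b c); unfold Kf in H; lra).
  assert (XX : mi X X = sg * sg * (be * be * mi B B + 2 * be * ga * mi B C + ga * ga * mi C C)).
  { unfold X. rewrite mi_scl, mi_scr, !mi_addl, !mi_addr, !mi_scl, !mi_scr, (mi_sym C B). ring. }
  rewrite Hsg, BB, CC in XX.
  assert (XXn : mi X X < 0).
  { rewrite XX. assert (be * ga * mi B C <= - (be * ga)) by (clear -Hbg BC; nra).
    assert (0 < (sg * be + sg * ga) * (sg * be + sg * ga)) by (clear -Hbg'; nra).
    assert ((sg * be + sg * ga) * (sg * be + sg * ga) = be * be + 2 * be * ga + ga * ga).
    { replace ((sg * be + sg * ga) * (sg * be + sg * ga)) with ((sg * sg) * (be*be + 2*be*ga + ga*ga)) by ring.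
      rewrite Hsg. ring. }
    lra. }
  assert (XB : mi X B < 0).
  { unfold X. rewrite mi_scl, mi_addl, !mi_scl, BB, (mi_sym C B).
    assert (sg * (ga * mi B C) <= - (sg * ga)) by (clear -Hg BC; nra).
    replace (sg * (be * -1 + ga * mi B C)) with (- (sg * be) + sg * (ga * mi B C)) by ring.
    lra. }
  assert (Xfut : 0 < c0 X).
  { apply (future_lemma X B); auto. rewrite BB; lra. apply phi0_pos. }
  set (n := sqrt (- mi X X)).
  assert (Hn : n * n = - mi X X) by (apply sqrt_sqrt; lra).
  assert (Hn0 : 0 < n) by (apply sqrt_lt_R0; lra).
  set (Y := vsc (/ n) X).
  assert (YY : mi Y Y = -1).
  { unfold Y. rewrite mi_scl, mi_scr. field_simplify_eq; [|lra]. lra. }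
  assert (Yfut : 0 < c0 Y).
  { unfold Y, vsc; simpl. apply Rmult_lt_0_compat; auto. apply Rinv_0_lt_compat; auto. }
  set (y := psi Y).
  assert (Py : phi y = Y) by (apply phi_psi; auto).
  assert (Hbc : b <> c).
  { intro E. apply Hdet. unfold C. rewrite <- E. apply det_rep. }
  assert (Cy : col b c y).
  { unfold col. fold B C. rewrite Py. unfold Y, X. rewrite !det_sc3. rewrite det_lin. ring. }
  assert (Ty : T y) by (apply (HT b c); auto).
  assert (Hay : a <> y).
  { intro E. apply Hdet. fold A B C. replace A with Y by (unfold A; rewrite E; auto).
    rewrite <- (det_perm1 Y B C). unfold Y, X. rewrite !det_sc3, det_lin. ring. }
  assert (Cz : col a y z).
  { unfold col. fold A. rewrite Py, Ez.
    assert (E2 : vadd (vsc al A) (vadd (vsc be B) (vsc ga C)) = vadd (vsc al A) (vsc (n * sg) Y)).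
    { unfold Y, X, vadd, vsc. destruct A, B, C; apply V3_ext; simpl; field_simplify_eq; try lra.
      all: rewrite ?Hsg; try ring.
      all: replace (sg ^ 2) with (sg * sg) by ring; rewrite Hsg; ring. }
    rewrite E2. apply det_lin. }
  apply (HT a y); auto.
Qed.

Lemma cramer a b c z : det3 a b c <> 0 ->
  z = vadd (vsc (det3 z b c / det3 a b c) a)
       (vadd (vsc (det3 a z c / det3 a b c) b) (vsc (det3 a b z / det3 a b c) c)).
Proof.
  intro H. destruct a, b, c, z. unfold det3, vadd, vsc in *; simpl in *.
  apply V3_ext; simpl; field; auto.
Qed.

Lemma triangle_lemma T a b c : lclosed T -> T a -> T b -> T c -> ~ col a b c ->
  forall z, T z.
Proof.
  intros HT Ta Tb Tc Hn z. unfold col in Hn.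
  set (D := det3 (phi a) (phi b) (phi c)) in *.
  set (al := det3 (phi z) (phi b) (phi c) / D).
  set (be := det3 (phi a) (phi z) (phi c) / D).
  set (ga := det3 (phi a) (phi b) (phi z) / D).
  assert (Ez : phi z = vadd (vsc al (phi a)) (vadd (vsc be (phi b)) (vsc ga (phi c))))
    by (apply cramer; auto).
  destruct (Rle_dec 0 (be * ga)) as [Hbg|Hbg].
  - destruct (Req_dec (be + ga) 0) as [Hs|Hs].
    + assert (be = 0) by (clear -Hbg Hs; nra). assert (ga = 0) by (clear -Hbg Hs; nra).
      assert (z = a).
      { apply (unit_prop a z al). rewrite Ez. rewrite H, H0. unfold vadd, vsc.
        destruct (phi a), (phi b), (phi c). apply V3_ext; simpl; ring. }
      subst; auto.
    + apply (vertex T a b c z al be ga); auto.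
  - destruct (Rle_dec 0 (al * be)) as [Hab|Hab].
    + apply (vertex T c a b z ga al be); auto.
      * rewrite (det_perm1 (phi b) (phi c) (phi a)), (det_perm1 (phi a) (phi b) (phi c)). fold D. auto.
      * rewrite Ez. unfold vadd, vsc. destruct (phi a), (phi b), (phi c). apply V3_ext; simpl; ring.
      * intro E. assert (be <> 0) by (intro; apply Hbg; subst be; rewrite H; lra).
        clear -Hab E H. nra.
    + assert (Hag : 0 < al * ga).
      { assert (0 < (al * be) * (be * ga)) by (clear -Hab Hbg; nra).
        assert (0 < be * be) by (clear -Hab; nra). clear -H H0. nra. }
      apply (vertex T b a c z be al ga); auto.
      * rewrite det_swap. fold D. lra.
      * rewrite Ez. unfold vadd, vsc. destruct (phi a), (phi b), (phi c). apply V3_ext; simpl; ring.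
      * lra.
      * clear -Hag. nra.
Qed.

Lemma det_rep1' a b : det3 a b a = 0.
Proof. unfold det3; ring. Qed.
Lemma det_rep' a b : det3 a b a = 0.
Proof. unfold det3; ring. Qed.
Lemma H2_dec (p q : H2) : {p = q} + {p <> q}.
Proof. destruct (excluded_middle_informative (p = q)); auto. Qed.

Definition Gam (x y : H2R) (t : R) : H2R :=
  (gam (fst x) (fst y) (t * dH (fst x) (fst y) / dH2R x y),
   snd x + t * (snd y - snd x) / dH2R x y).

Lemma dH2R_eq x y : dH2R x y =
  sqrt (dH (fst x) (fst y) * dH (fst x) (fst y) + (snd x - snd y) * (snd x - snd y)).
Proof. unfold dH2R. f_equal. ring. Qed.

Lemma sqrt_sum_nonneg a b : 0 <= a * a + b * b.
Proof. pose proof (Rle_0_sqr a); pose proof (Rle_0_sqr b); unfold Rsqr in *; lra. Qed.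

Lemma dH2R_nonneg x y : 0 <= dH2R x y.
Proof. unfold dH2R. apply sqrt_pos. Qed.

Lemma dH2R_sym x y : dH2R x y = dH2R y x.
Proof. rewrite !dH2R_eq, dH_sym. f_equal. ring. Qed.

Lemma dH2R_sq x y : dH2R x y * dH2R x y =
  dH (fst x) (fst y) * dH (fst x) (fst y) + (snd x - snd y) * (snd x - snd y).
Proof. rewrite dH2R_eq. apply sqrt_sqrt. apply sqrt_sum_nonneg. Qed.

Lemma dH2R_zero x y : dH2R x y = 0 -> x = y.
Proof.
  intro H. pose proof (dH2R_sq x y) as E. rewrite H in E.
  assert (E1 : dH (fst x) (fst y) = 0).
  { apply (sq0 _ (snd x - snd y)). lra. }
  assert (E2 : snd x - snd y = 0).
  { apply (sq0 _ (dH (fst x) (fst y))). lra. }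
  apply dH_zero in E1. destruct x, y; simpl in *. f_equal; auto. lra.
Qed.

Lemma sqrt_sq_abs a : sqrt (a * a) = Rabs a.
Proof. apply sqrt_Rsqr_abs. Qed.

Lemma Gam_iso x y t t' : 0 < dH2R x y ->
  dH2R (Gam x y t) (Gam x y t') = Rabs (t - t').
Proof.
  intro HD. set (D := dH2R x y) in *. set (d := dH (fst x) (fst y)).
  assert (H1 : dH (fst (Gam x y t)) (fst (Gam x y t')) = Rabs (t - t') * d / D).
  { unfold Gam; simpl. fold D d.
    destruct (Req_dec d 0) as [E|E].
    - rewrite E. replace (t * 0 / D) with 0 by (field; lra).
      replace (t' * 0 / D) with 0 by (field; lra). rewrite dH_self. field. lra.
    - assert (Hd : 0 < d) by (pose proof (dH_nonneg (fst x) (fst y)); fold d in H; lra).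
      rewrite dH_gam; auto. fold d.
      replace (t * d / D - t' * d / D) with ((t - t') * (d / D)) by (field; lra).
      rewrite Rabs_mult, (Rabs_right (d / D)). field. lra.
      left. apply Rdiv_lt_0_compat; auto. }
  rewrite dH2R_eq, H1. unfold Gam; simpl. fold D.
  pose proof (dH2R_sq x y) as E. fold D d in E.
  assert (RA : Rabs (t - t') * Rabs (t - t') = (t - t') * (t - t')).
  { rewrite <- Rabs_mult. apply Rabs_right. pose proof (Rle_0_sqr (t - t')). unfold Rsqr in H. lra. }
  match goal with |- sqrt ?X = _ => replace X with ((t - t') * (t - t')) end.
  { apply sqrt_sq_abs. }
  transitivity ((Rabs (t - t') * Rabs (t - t')) * (d * d) / (D * D)
     + (t - t') * (t - t') * ((snd x - snd y) * (snd x - snd y)) / (D * D)).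
  - rewrite RA. replace ((t - t') * (t - t') * (d * d) / (D * D) +
      (t - t') * (t - t') * ((snd x - snd y) * (snd x - snd y)) / (D * D)) with
      ((t - t') * (t - t') * (d * d + (snd x - snd y) * (snd x - snd y)) / (D * D)) by (field; lra).
    rewrite <- E. field. lra.
  - field. lra.
Qed.

Lemma l2_between a1 a2 b1 b2 c1 c2 :
  0 <= a1 -> 0 <= a2 -> 0 <= b1 -> 0 <= b2 -> 0 <= c1 -> 0 <= c2 ->
  c1 <= a1 + b1 -> c2 <= a2 + b2 ->
  sqrt (c1 * c1 + c2 * c2) = sqrt (a1 * a1 + a2 * a2) + sqrt (b1 * b1 + b2 * b2) ->
  c1 = a1 + b1 /\ c2 = a2 + b2 /\
  sqrt (b1 * b1 + b2 * b2) * a1 = sqrt (a1 * a1 + a2 * a2) * b1 /\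
  sqrt (b1 * b1 + b2 * b2) * a2 = sqrt (a1 * a1 + a2 * a2) * b2.
Proof.
  intros Ha1 Ha2 Hb1 Hb2 Hc1 Hc2 L1 L2 E.
  set (al := sqrt (a1 * a1 + a2 * a2)) in *. set (be := sqrt (b1 * b1 + b2 * b2)) in *.
  assert (HA : al * al = a1 * a1 + a2 * a2) by (apply sqrt_sqrt; apply sqrt_sum_nonneg).
  assert (HB : be * be = b1 * b1 + b2 * b2) by (apply sqrt_sqrt; apply sqrt_sum_nonneg).
  assert (HC : sqrt (c1 * c1 + c2 * c2) * sqrt (c1 * c1 + c2 * c2) = c1 * c1 + c2 * c2)
    by (apply sqrt_sqrt; apply sqrt_sum_nonneg).
  rewrite E in HC.
  assert (Hal : 0 <= al) by apply sqrt_pos. assert (Hbe : 0 <= be) by apply sqrt_pos.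
  assert (S1 : c1 * c1 <= (a1 + b1) * (a1 + b1)) by (clear -Hc1 L1; nra).
  assert (S2 : c2 * c2 <= (a2 + b2) * (a2 + b2)) by (clear -Hc2 L2; nra).
  assert (I1 : al * be <= a1 * b1 + a2 * b2) by (clear -HC HA HB S1 S2; nra).
  assert (CS : (a1 * b1 + a2 * b2) * (a1 * b1 + a2 * b2) <= (al * be) * (al * be)).
  { replace ((al * be) * (al * be)) with ((al * al) * (be * be)) by ring. rewrite HA, HB.
    pose proof (Rle_0_sqr (a1 * b2 - a2 * b1)). unfold Rsqr in H. nra. }
  assert (I2 : a1 * b1 + a2 * b2 <= al * be).
  { assert (0 <= al * be) by (apply Rmult_le_pos; auto). clear -CS H I1. nra. }
  assert (Eq : a1 * b1 + a2 * b2 = al * be) by lra.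
  assert (Ec : c1 * c1 + c2 * c2 = (a1 + b1) * (a1 + b1) + (a2 + b2) * (a2 + b2))
    by (clear -HC HA HB Eq; nra).
  assert (Ec1 : c1 * c1 = (a1 + b1) * (a1 + b1)) by lra.
  assert (Ec2 : c2 * c2 = (a2 + b2) * (a2 + b2)) by lra.
  assert (Z : (be * a1 - al * b1) * (be * a1 - al * b1) + (be * a2 - al * b2) * (be * a2 - al * b2) = 0).
  { replace ((be * a1 - al * b1) * (be * a1 - al * b1) + (be * a2 - al * b2) * (be * a2 - al * b2))
      with ((be * be) * (a1 * a1 + a2 * a2) + (al * al) * (b1 * b1 + b2 * b2) - 2 * (al * be) * (a1 * b1 + a2 * b2)) by ring.
    rewrite <- HA, <- HB, Eq. ring. }
  split; [|split; [|split]].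
  - clear -Ec1 Hc1 Ha1 Hb1. nra.
  - clear -Ec2 Hc2 Ha2 Hb2. nra.
  - apply Rminus_diag_uniq. apply (sq0 _ (be * a2 - al * b2)). exact Z.
  - apply Rminus_diag_uniq. apply (sq0 _ (be * a1 - al * b1)). lra.
Qed.

Definition v1 (X Y : H2R) := dH (fst X) (fst Y).
Definition v2 (X Y : H2R) := Rabs (snd X - snd Y).

Lemma dH2R_v X Y : dH2R X Y = sqrt (v1 X Y * v1 X Y + v2 X Y * v2 X Y).
Proof.
  rewrite dH2R_eq. unfold v1, v2. f_equal. f_equal.
  rewrite <- Rabs_mult, Rabs_right. auto. pose proof (Rle_0_sqr (snd X - snd Y)). unfold Rsqr in H. lra.
Qed.

Lemma between X Y Z : dH2R X Z = dH2R X Y + dH2R Y Z ->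
  v1 X Z = v1 X Y + v1 Y Z /\ v2 X Z = v2 X Y + v2 Y Z /\
  dH2R Y Z * v1 X Y = dH2R X Y * v1 Y Z /\ dH2R Y Z * v2 X Y = dH2R X Y * v2 Y Z.
Proof.
  intro E. rewrite !dH2R_v in *.
  apply l2_between; try apply dH_nonneg; try apply Rabs_pos; auto.
  - apply dH_triangle.
  - unfold v2. replace (snd X - snd Z) with ((snd X - snd Y) + (snd Y - snd Z)) by ring.
    apply Rabs_triang.
Qed.

Lemma v1_sym X Y : v1 X Y = v1 Y X.
Proof. unfold v1. apply dH_sym. Qed.
Lemma v2_sym X Y : v2 X Y = v2 Y X.
Proof. unfold v2. apply Rabs_minus_sym. Qed.

Lemma ratios x y q t : 0 < dH2R x y -> dH2R x q = Rabs t -> dH2R q y = Rabs (t - dH2R x y) ->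
  v1 x q = Rabs t * v1 x y / dH2R x y /\ v1 q y = Rabs (t - dH2R x y) * v1 x y / dH2R x y /\
  v2 x q = Rabs t * v2 x y / dH2R x y /\ v2 q y = Rabs (t - dH2R x y) * v2 x y / dH2R x y.
Proof.
  intros HD E1 E2. set (D := dH2R x y) in *.
  destruct (Rle_dec 0 t) as [Ht|Ht]; [destruct (Rle_dec t D) as [Ht2|Ht2]|].
  - assert (R1 : Rabs t = t) by (apply Rabs_right; lra).
    assert (R2 : Rabs (t - D) = D - t) by (rewrite Rabs_left1; lra).
    rewrite R1, R2 in *.
    destruct (between x q y) as [A1 [A2 [A3 A4]]]. fold D. rewrite E1, E2. ring.
    fold D in A1, A2. rewrite E1, E2 in A3, A4.
    split; [|split; [|split]]; apply (Rmult_eq_reg_l D); try lra; field_simplify; try lra;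
      rewrite ?A1, ?A2; lra.
  - assert (R1 : Rabs t = t) by (apply Rabs_right; lra).
    assert (R2 : Rabs (t - D) = t - D) by (apply Rabs_right; lra).
    rewrite R1, R2 in *.
    destruct (between x y q) as [A1 [A2 [A3 A4]]]. fold D. rewrite E1, (dH2R_sym y q), E2. ring.
    fold D in A3, A4. rewrite (dH2R_sym y q), E2 in A3, A4.
    rewrite (v1_sym y q) in A1, A3. rewrite (v2_sym y q) in A2, A4.
    split; [|split; [|split]]; apply (Rmult_eq_reg_l D); try lra; field_simplify; try lra;
      rewrite ?A1, ?A2; lra.
  - assert (R1 : Rabs t = - t) by (apply Rabs_left; lra).
    assert (R2 : Rabs (t - D) = D - t) by (rewrite Rabs_left; lra).
    rewrite R1, R2 in *.
    destruct (between q x y) as [A1 [A2 [A3 A4]]]. fold D. rewrite (dH2R_sym q x), E1, E2. ring.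
    fold D in A3, A4. rewrite (dH2R_sym q x), E1 in A3, A4.
    rewrite (v1_sym q x) in A1, A3. rewrite (v2_sym q x) in A2, A4.
    split; [|split; [|split]]; apply (Rmult_eq_reg_l D); try lra; field_simplify; try lra;
      rewrite ?A1, ?A2; lra.
Qed.

Lemma abs_sq a : Rabs a * Rabs a = a * a.
Proof. rewrite <- Rabs_mult. apply Rabs_right. pose proof (Rle_0_sqr a). unfold Rsqr in H. lra. Qed.

Lemma oneD w e t D : 0 < D -> Rabs w = Rabs t * Rabs e / D -> Rabs (w - e) = Rabs (t - D) * Rabs e / D ->
  w = t * e / D.
Proof.
  intros HD E1 E2.
  assert (S1 : w * w = t * t * (e * e) / (D * D)).
  { rewrite <- abs_sq, E1. rewrite <- (abs_sq t), <- (abs_sq e). field. lra. }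
  assert (S2 : (w - e) * (w - e) = (t - D) * (t - D) * (e * e) / (D * D)).
  { rewrite <- abs_sq, E2. rewrite <- (abs_sq (t - D)), <- (abs_sq e). field. lra. }
  assert (K : w * e * D = t * (e * e)).
  { assert (X : (w - e) * (w - e) - w * w = (t - D) * (t - D) * (e * e) / (D * D) - t * t * (e * e) / (D * D)) by lra.
    replace ((t - D) * (t - D) * (e * e) / (D * D) - t * t * (e * e) / (D * D))
      with (e * e - 2 * t * (e * e) / D) in X by (field; lra).
    apply (Rmult_eq_reg_r (/ D)). 2: apply Rinv_neq_0_compat; lra.
    replace (w * e * D * / D) with (w * e) by (field; lra).
    replace (t * (e * e) * / D) with (t * (e * e) / D) by (unfold Rdiv; ring).
    lra. }
  destruct (Req_dec e 0) as [He|He].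
  - subst. replace (t * 0 / D) with 0 by (field; lra). rewrite Rmult_0_r in S1.
    replace (t * t * 0 / (D * D)) with 0 in S1 by (field; lra).
    apply (sq0 w 0). lra.
  - apply (Rmult_eq_reg_r (e * D)). 2: apply Rmult_integral_contrapositive; split; lra.
    replace (t * e / D * (e * D)) with (t * (e * e)) by (field; lra). lra.
Qed.

Lemma core_H2R x y q t : 0 < dH2R x y -> dH2R x q = Rabs t -> dH2R q y = Rabs (t - dH2R x y) ->
  q = Gam x y t.
Proof.
  intros HD E1 E2. destruct (ratios x y q t HD E1 E2) as [R1 [R2 [R3 R4]]].
  set (D := dH2R x y) in *. unfold v1, v2 in *.
  set (d := dH (fst x) (fst y)) in *.
  assert (Hproj : fst q = gam (fst x) (fst y) (t * d / D)).
  { destruct (Req_dec d 0) as [Ed|Ed].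
    - rewrite Ed in *. replace (t * 0 / D) with 0 by (field; lra). rewrite gam0.
      replace (Rabs t * 0 / D) with 0 in R1 by (field; lra).
      symmetry. apply dH_zero. auto.
    - assert (Hd : 0 < d) by (pose proof (dH_nonneg (fst x) (fst y)); fold d in H; lra).
      apply core_H2; auto.
      + fold d. rewrite R1. unfold Rdiv. rewrite !Rabs_mult, Rabs_inv, (Rabs_right d), (Rabs_right D); try lra; try reflexivity.
      + fold d. rewrite R2.
        replace (t * d / D - d) with ((t - D) * (d / D)) by (field; lra).
        rewrite Rabs_mult, (Rabs_right (d / D)). field. lra.
        left. apply Rdiv_lt_0_compat; lra. }
  assert (Hh : snd q - snd x = t * (snd y - snd x) / D).
  { apply oneD; auto.
    - rewrite (Rabs_minus_sym (snd q)), R3, (Rabs_minus_sym (snd x) (snd y)). reflexivity.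
    - replace (snd q - snd x - (snd y - snd x)) with (snd q - snd y) by ring.
      rewrite R4, (Rabs_minus_sym (snd x) (snd y)). reflexivity. }
  destruct q as [q1 q2]. unfold Gam. simpl in *. fold D d. rewrite <- Hproj. f_equal. lra.
Qed.

Lemma iso_window (f : R -> H2R) (W : R -> Prop) a b s :
  (forall s s', W s -> W s' -> dH2R (f s) (f s') = Rabs (s - s')) ->
  W a -> W b -> W s -> a < b -> f s = Gam (f a) (f b) (s - a).
Proof.
  intros Hiso Wa Wb Ws Hab.
  assert (HD : dH2R (f a) (f b) = b - a) by (rewrite Hiso; auto; rewrite Rabs_left; lra).
  apply core_H2R.
  - lra.
  - rewrite Hiso; auto. rewrite Rabs_minus_sym. reflexivity.
  - rewrite Hiso; auto. rewrite HD. f_equal. ring.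
Qed.

Lemma propagate_pos (P : R -> Prop) :
  (exists e, 0 < e /\ forall s, Rabs s < e -> P s) ->
  (forall t, exists e, 0 < e /\ forall a b, Rabs (a - t) < e -> Rabs (b - t) < e -> a <> b ->
      P a -> P b -> forall s, Rabs (s - t) < e -> P s) ->
  forall s, 0 <= s -> P s.
Proof.
  intros [e0 [He0 H0]] Hst s0 Hs0.
  apply NNPP. intro Hn.
  set (E := fun T => 0 <= T /\ forall s, 0 <= s <= T -> P s).
  assert (Hb : bound E).
  { exists s0. intros T [HT HP]. destruct (Rle_dec T s0); auto. exfalso. apply Hn. apply HP. lra. }
  assert (He : E (e0 / 2)).
  { split. lra. intros s Hs. apply H0. rewrite Rabs_right; lra. }
  destruct (completeness E Hb (ex_intro _ _ He)) as [T [Hub Hlub]].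
  assert (HT : e0 / 2 <= T) by (apply Hub; auto).
  destruct (Hst T) as [e [He1 Hw]].
  set (dl := Rmin (e / 2) (T / 2)).
  assert (Hdl : 0 < dl) by (unfold dl; apply Rmin_glb_lt; lra).
  assert (Hdl1 : dl <= e / 2) by apply Rmin_l. assert (Hdl2 : dl <= T / 2) by apply Rmin_r.
  assert (HT1 : exists T1, E T1 /\ T - dl < T1).
  { apply NNPP. intro K. assert (T <= T - dl).
    { apply Hlub. intros x Ex. destruct (Rle_dec x (T - dl)); auto. exfalso. apply K. exists x. split; auto. lra. }
    lra. }
  destruct HT1 as [T1 [[HT1a HT1b] HT1c]].
  assert (T1 <= T) by (apply Hub; split; auto).
  assert (Pwin : forall s, Rabs (s - T) < e -> P s).
  { apply (Hw T1 (T1 - dl / 2)).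
    - rewrite Rabs_left1; lra.
    - rewrite Rabs_left1; lra.
    - lra.
    - apply HT1b. lra.
    - apply HT1b. lra. }
  assert (E (T + e / 2)).
  { split. lra. intros s Hs. destruct (Rle_dec s T1). apply HT1b. lra.
    apply Pwin. destruct (Rle_dec s T). rewrite Rabs_left1; lra. rewrite Rabs_right; lra. }
  assert (T + e / 2 <= T) by (apply Hub; auto). lra.
Qed.

Lemma propagate (P : R -> Prop) :
  (exists e, 0 < e /\ forall s, Rabs s < e -> P s) ->
  (forall t, exists e, 0 < e /\ forall a b, Rabs (a - t) < e -> Rabs (b - t) < e -> a <> b ->
      P a -> P b -> forall s, Rabs (s - t) < e -> P s) ->
  forall s, P s.
Proof.
  intros H0 Hst s. destruct (Rle_dec 0 s). apply propagate_pos; auto.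
  replace s with (- - s) by ring.
  apply (propagate_pos (fun s => P (- s))).
  - destruct H0 as [e [He H]]. exists e. split; auto. intros. apply H. rewrite Rabs_Ropp. auto.
  - intro t. destruct (Hst (- t)) as [e [He H]]. exists e. split; auto.
    intros a b Ha Hb Hab Pa Pb s' Hs'. apply (H (- a) (- b)); auto.
    + replace (- a - - t) with (- (a - t)) by ring. rewrite Rabs_Ropp. auto.
    + replace (- b - - t) with (- (b - t)) by ring. rewrite Rabs_Ropp. auto.
    + intro. apply Hab. lra.
    + replace (- s' - - t) with (- (s' - t)) by ring. rewrite Rabs_Ropp. auto.
  - lra.
Qed.

Ltac abs_solve := try rewrite Rminus_0_r; try rewrite Rminus_diag; try rewrite Rabs_R0;
  first [ lra | rewrite Rabs_right; lra | rewrite Rabs_left; lra | rewrite Rabs_left1; lra ].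

Lemma loc_glob (c : R -> H2R) : locally_isometric dH2R c ->
  exists x y, 0 < dH2R x y /\ forall s, c s = Gam x y s.
Proof.
  intro Hc. destruct (Hc 0) as [e0 [He0 Hw0]].
  set (x := c 0). set (y := c (e0 / 2)).
  assert (HD : dH2R x y = e0 / 2).
  { unfold x, y. rewrite Hw0; abs_solve. }
  exists x, y. split. lra.
  apply propagate.
  - exists e0. split; auto. intros s Hs. apply core_H2R. lra.
    + unfold x. rewrite Hw0 by (try rewrite Rminus_0_r; auto; abs_solve).
      rewrite Rabs_minus_sym, Rminus_0_r. auto.
    + rewrite HD. unfold y. rewrite Hw0 by (try rewrite Rminus_0_r; auto; abs_solve). auto.
  - intro t. destruct (Hc t) as [e [He Hw]]. exists e. split; auto.
    intros a b Ha Hb Hab Pa Pb s Hs.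
    assert (GI : forall s s', dH2R (Gam x y s) (Gam x y s') = Rabs (s - s')) by (intros; apply Gam_iso; lra).
    destruct (Rlt_dec a b).
    + rewrite (iso_window c (fun s => Rabs (s - t) < e) a b s); auto.
      rewrite (iso_window (Gam x y) (fun _ => True) a b s); auto. rewrite Pa, Pb. reflexivity.
    + assert (b < a) by lra.
      rewrite (iso_window c (fun s => Rabs (s - t) < e) b a s); auto.
      rewrite (iso_window (Gam x y) (fun _ => True) b a s); auto. rewrite Pa, Pb. reflexivity.
Qed.

Lemma geo_line G a b : is_geodesic dH2R G -> G a -> G b -> a <> b -> forall t, G (Gam a b t).
Proof.
  intros [c [Hc Himg]] Ga Gb Hab t.
  destruct (loc_glob c Hc) as [x [y [HD Hcg]]].
  assert (GI : forall s s', dH2R (c s) (c s') = Rabs (s - s')) by (intros; rewrite !Hcg; apply Gam_iso; lra).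
  apply Himg in Ga. apply Himg in Gb. destruct Ga as [ta Ha]. destruct Gb as [tb Hb].
  apply Himg.
  destruct (Rlt_dec ta tb).
  - exists (ta + t). rewrite (iso_window c (fun _ => True) ta tb (ta + t)); auto.
    rewrite Ha, Hb. f_equal. ring.
  - assert (ta <> tb) by (intro E; apply Hab; rewrite <- Ha, <- Hb, E; reflexivity).
    exists (ta - t).
    set (f := fun s => c (- s)).
    assert (GIf : forall s s', True -> True -> dH2R (f s) (f s') = Rabs (s - s')).
    { intros. unfold f. rewrite GI. rewrite <- Rabs_Ropp. f_equal. ring. }
    replace (c (ta - t)) with (f (- ta + t)) by (unfold f; f_equal; ring).
    rewrite (iso_window f (fun _ => True) (- ta) (- tb) (- ta + t)); auto.
    unfold f. rewrite !Ropp_involutive, Ha, Hb. f_equal. ring. lra.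
Qed.

Lemma geo_other G a : is_geodesic dH2R G -> G a -> exists b, G b /\ a <> b.
Proof.
  intros [c [Hc Himg]] Ga.
  destruct (loc_glob c Hc) as [x [y [HD Hcg]]].
  apply Himg in Ga. destruct Ga as [ta Ha].
  exists (c (ta + 1)). split. apply Himg. eauto.
  intro E. assert (dH2R (c ta) (c (ta + 1)) = 0) by (rewrite Ha, E; rewrite dH2R_eq, dH_self; replace (0*0 + (snd (c (ta+1)) - snd (c (ta+1))) * (snd (c (ta+1)) - snd (c (ta+1)))) with 0 by ring; apply sqrt_0).
  rewrite !Hcg, Gam_iso in H by lra. rewrite Rabs_left in H; lra.
Qed.

Lemma Gam_geodesic x y : 0 < dH2R x y -> is_geodesic dH2R (fun z => exists t, Gam x y t = z).
Proof.
  intro HD. exists (Gam x y). split.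
  - intro t. exists 1. split. lra. intros. apply Gam_iso; auto.
  - intro z. tauto.
Qed.

Lemma line_geodesic p r : p <> r -> is_geodesic dH (col p r).
Proof.
  intro Hpr. pose proof (dH_pos p r Hpr) as Hd. exists (gam p r). split.
  - intro t. exists 1. split. lra. intros. apply dH_gam; auto.
  - intro q. split.
    + intro Hc. destruct (onto p r q Hpr Hc) as [u Hu]. exists u. auto.
    + intros [u Hu]. subst. apply col_gam.
Qed.

Section Cls.
Variable S : H2R -> Prop.
Hypothesis SC : forall a b, S a -> S b -> a <> b -> forall t, S (Gam a b t).

Lemma dH2R_pos x y : x <> y -> 0 < dH2R x y.
Proof.
  intro H. destruct (dH2R_nonneg x y) as [h|h]; auto. exfalso. apply H. apply dH2R_zero. auto.
Qed.

Lemma C3_vertical x y : S x -> S y -> x <> y -> fst x = fst y -> forall h, S (fst x, h).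
Proof.
  intros Sx Sy Hxy Hf h.
  pose proof (dH2R_pos x y Hxy) as HD. set (D := dH2R x y) in *.
  assert (Hs : snd y - snd x <> 0).
  { intro E. apply Hxy. destruct x, y; simpl in *. f_equal; auto. lra. }
  set (t := (h - snd x) * D / (snd y - snd x)).
  replace (fst x, h) with (Gam x y t). apply SC; auto.
  unfold Gam. fold D. rewrite <- Hf, dH_self. f_equal.
  - replace (t * 0 / D) with 0 by (field; lra). apply gam0.
  - unfold t. field. split; lra.
Qed.

Lemma C1_closed x y q : S x -> S y -> fst x <> fst y -> col (fst x) (fst y) q -> exists h, S (q, h).
Proof.
  intros Sx Sy Hxy Hc.
  assert (Hne : x <> y) by (intro E; apply Hxy; rewrite E; auto).
  pose proof (dH2R_pos x y Hne) as HD. pose proof (dH_pos _ _ Hxy) as Hd.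
  destruct (onto _ _ _ Hxy Hc) as [u Hu].
  set (t := u * dH2R x y / dH (fst x) (fst y)).
  exists (snd (Gam x y t)).
  replace (q, snd (Gam x y t)) with (Gam x y t). apply SC; auto.
  unfold Gam. simpl. f_equal. rewrite Hu. f_equal. unfold t. field. lra.
Qed.

Lemma gam_delta p r : 0 < dH p r -> gam p r (dH p r) = r.
Proof.
  intro Hd. symmetry. apply core_H2; auto.
  - rewrite Rabs_right; lra.
  - rewrite dH_self, Rminus_diag, Rabs_R0. reflexivity.
Qed.

Lemma C2_fiber z q : (forall h, S (q, h)) -> S z -> fst z <> q ->
  forall w, col (fst z) q w -> forall h, S (w, h).
Proof.
  intros Fq Sz Hzq w Hc.
  set (p := fst z) in *. pose proof (dH_pos _ _ Hzq) as Hd. set (d := dH p q) in *.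
  assert (Step1 : forall v, v <> 0 -> forall h, S (gam p q v, h)).
  { intros v Hv h.
    set (x1 := (q, snd z + (h - snd z) * d / v)).
    assert (Hne : z <> x1) by (intro E; apply Hzq; unfold p; rewrite E; reflexivity).
    pose proof (dH2R_pos _ _ Hne) as HD.
    replace (gam p q v, h) with (Gam z x1 (v * dH2R z x1 / d)).
    apply SC; auto. apply Fq.
    unfold Gam. simpl. fold p d. f_equal.
    - f_equal. field. lra.
    - field. split; lra. }
  destruct (onto _ _ _ Hzq Hc) as [v Hv]. subst w.
  destruct (Req_dec v 0) as [E|E]; [|apply Step1; auto].
  subst v. rewrite gam0. intro h.
  set (w2 := gam p q (- d)).
  assert (Sw2 : S (w2, h)) by (apply Step1; lra).
  assert (Eq : q = gam p q d) by (symmetry; apply gam_delta; auto).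
  assert (Ep : p = gam p q 0) by (symmetry; apply gam0).
  assert (Dqw : dH q w2 = 2 * d).
  { rewrite Eq at 1. unfold w2. rewrite dH_gam; auto. rewrite Rabs_right; lra. }
  assert (Hqw : q <> w2) by (intro E; rewrite <- E, dH_self in Dqw; lra).
  set (x1 := (q, h)). set (x2 := (w2, h)).
  assert (Hne : x1 <> x2) by (intro E; apply Hqw; unfold x1, x2 in E; injection E; auto).
  assert (HD : dH2R x1 x2 = 2 * d).
  { rewrite dH2R_eq. unfold x1, x2. simpl. rewrite Dqw. replace (h - h) with 0 by ring.
    rewrite Rmult_0_r, Rplus_0_r. apply sqrt_square. lra. }
  assert (Pm : p = gam q w2 d).
  { apply core_H2.
    - lra.
    - rewrite Eq at 1. rewrite Ep at 2. rewrite dH_gam by auto. rewrite Rminus_0_r. reflexivity.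
    - rewrite Dqw. rewrite Ep at 1. unfold w2. rewrite dH_gam by auto.
      rewrite (Rabs_right (0 - - d)), (Rabs_left (d - 2 * d)); lra. }
  replace (p, h) with (Gam x1 x2 d). apply SC; auto. apply Fq.
  unfold Gam. rewrite HD. unfold x1, x2. simpl. rewrite Dqw. f_equal.
  - rewrite Pm. f_equal. field. lra.
  - field. lra.
Qed.

Lemma iso_curve (hf : H2 -> R) (sg : R -> H2) :
  (forall q, S (q, hf q)) -> (forall q h, S (q, h) -> h = hf q) ->
  (forall s s', dH (sg s) (sg s') = Rabs (s - s')) ->
  forall s, hf (sg s) = hf (sg 0) + s * (hf (sg 1) - hf (sg 0)).
Proof.
  intros Hall Hgr Hiso s.
  set (x := (sg 0, hf (sg 0))). set (y := (sg 1, hf (sg 1))).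
  assert (Hd : dH (sg 0) (sg 1) = 1) by (rewrite Hiso; rewrite Rabs_left; lra).
  assert (Hne : x <> y).
  { intro E. unfold x, y in E. injection E. intros _ E1. rewrite E1, dH_self in Hd. lra. }
  pose proof (dH2R_pos _ _ Hne) as HD.
  symmetry. apply Hgr.
  replace (sg s, hf (sg 0) + s * (hf (sg 1) - hf (sg 0))) with (Gam x y (s * dH2R x y)).
  apply SC; auto. unfold x; apply Hall. unfold y; apply Hall.
  unfold Gam. change (fst x) with (sg 0). change (fst y) with (sg 1). change (snd x) with (hf (sg 0)). change (snd y) with (hf (sg 1)). rewrite Hd. f_equal.
  - replace (s * dH2R x y * 1 / dH2R x y) with s by (field; lra).
    symmetry. apply core_H2; rewrite ?Hd; try lra.
    + rewrite Hiso. rewrite Rabs_minus_sym, Rminus_0_r. auto.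
    + rewrite Hiso. auto.
  - field. lra.
Qed.

End Cls.

Definition pt (x y : R) : H2 := mkH2 x (posify y) (posify_pos y).

Lemma posify_id y : 0 < y -> posify y = y.
Proof. unfold posify. destruct (Rlt_dec 0 y); lra. Qed.

Lemma dH_pt x y x' y' : 0 < y -> 0 < y' ->
  dH (pt x y) (pt x' y') = arcosh (1 + ((x - x') ^ 2 + (y - y') ^ 2) / (2 * y * y')).
Proof. intros. unfold dH, pt. simpl hx. simpl hy. rewrite !posify_id; auto. Qed.

Lemma ch_diff s s' : ch (s - s') = (exp s / exp s' + exp s' / exp s) / 2.
Proof.
  unfold ch. unfold Rminus. rewrite exp_plus, Ropp_plus_distr, Ropp_involutive, exp_plus, !expo_inv.
  pose proof (exp_pos s). pose proof (exp_pos s'). field. lra.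
Qed.

Definition vert (c s : R) : H2 := pt c (exp s).

Lemma vert_iso c s s' : dH (vert c s) (vert c s') = Rabs (s - s').
Proof.
  unfold vert. rewrite dH_pt by apply exp_pos. rewrite <- arcosh_ch. f_equal.
  rewrite ch_diff. pose proof (exp_pos s). pose proof (exp_pos s'). field. lra.
Qed.

Definition semi (c R0 s : R) : H2 :=
  pt (c + R0 * ((exp s * exp s - 1) / (exp s * exp s + 1))) (2 * R0 * exp s / (exp s * exp s + 1)).

Lemma semi_iso c R0 s s' : 0 < R0 -> dH (semi c R0 s) (semi c R0 s') = Rabs (s - s').
Proof.
  intro HR. pose proof (exp_pos s). pose proof (exp_pos s').
  set (E := exp s) in *. set (F := exp s') in *.
  assert (0 < E * E + 1) by nra. assert (0 < F * F + 1) by nra.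
  unfold semi. fold E F. rewrite dH_pt.
  2: { apply Rdiv_lt_0_compat; nra. }
  2: { apply Rdiv_lt_0_compat; nra. }
  rewrite <- arcosh_ch. f_equal. rewrite ch_diff. fold E F.
  field. repeat split; nra.
Qed.

Lemma pt_eq x y x' y' : x = x' -> y = y' -> pt x y = pt x' y'.
Proof. intros; subst; reflexivity. Qed.

Section Const.
Variable S : H2R -> Prop.
Hypothesis SC : forall a b, S a -> S b -> a <> b -> forall t, S (Gam a b t).
Variable hf : H2 -> R.
Hypothesis Hall : forall q, S (q, hf q).
Hypothesis Hgr : forall q h, S (q, h) -> h = hf q.

Lemma V_lin c y : 0 < y -> hf (pt c y) = hf (pt c 1) + ln y * (hf (pt c (exp 1)) - hf (pt c 1)).
Proof.
  intro Hy. pose proof (iso_curve S SC hf (vert c) Hall Hgr (vert_iso c) (ln y)) as H.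
  unfold vert in H. rewrite exp_ln, exp_0 in H by auto. exact H.
Qed.

Lemma semi_pair c R0 q x y : 0 < R0 -> 0 < q -> R0 * ((q * q - 1) / (q * q + 1)) = x ->
  2 * R0 * q / (q * q + 1) = y -> hf (pt (c + x) y) + hf (pt (c - x) y) = 2 * hf (pt c R0).
Proof.
  intros HR Hq Ex Ey.
  pose proof (iso_curve S SC hf (semi c R0) Hall Hgr (fun s s' => semi_iso c R0 s s' HR)) as H.
  pose proof (H (ln q)) as H1. pose proof (H (- ln q)) as H2.
  assert (A : semi c R0 (ln q) = pt (c + x) y).
  { unfold semi. rewrite exp_ln by auto. apply pt_eq; lra. }
  assert (B : semi c R0 (- ln q) = pt (c - x) y).
  { unfold semi. rewrite expo_inv, exp_ln by auto. apply pt_eq.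
    - rewrite <- Ex. field. split; [nra|lra].
    - rewrite <- Ey. field. split; [nra|lra]. }
  assert (C : semi c R0 0 = pt c R0).
  { unfold semi. rewrite exp_0. apply pt_eq; field. }
  rewrite A in H1. rewrite B in H2. rewrite C in H1, H2. lra.
Qed.

Lemma ln_mult' a b c : 0 < a -> 0 < b -> a * b = c -> ln a + ln b = ln c.
Proof. intros. subst. rewrite ln_mult; auto. Qed.

Lemma stepA c y : 0 < y -> hf (pt c y) = hf (pt c 1).
Proof.
  intro Hy.
  pose proof (semi_pair c (5/3) 2 1 (4/3) ltac:(lra) ltac:(lra) ltac:(field) ltac:(field)) as P1.
  pose proof (semi_pair c (5/4) 3 1 (3/4) ltac:(lra) ltac:(lra) ltac:(field) ltac:(field)) as P2.
  pose proof (semi_pair c (13/5) (3/2) 1 (12/5) ltac:(lra) ltac:(lra) ltac:(field) ltac:(field)) as P3.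
  pose proof (semi_pair c (13/12) 5 1 (5/12) ltac:(lra) ltac:(lra) ltac:(field) ltac:(field)) as P4.
  pose proof (V_lin (c + 1) (4/3) ltac:(lra)). pose proof (V_lin (c + 1) (3/4) ltac:(lra)).
  pose proof (V_lin (c + 1) (12/5) ltac:(lra)). pose proof (V_lin (c + 1) (5/12) ltac:(lra)).
  pose proof (V_lin (c - 1) (4/3) ltac:(lra)). pose proof (V_lin (c - 1) (3/4) ltac:(lra)).
  pose proof (V_lin (c - 1) (12/5) ltac:(lra)). pose proof (V_lin (c - 1) (5/12) ltac:(lra)).
  pose proof (V_lin c (5/3) ltac:(lra)). pose proof (V_lin c (5/4) ltac:(lra)).
  pose proof (V_lin c (13/5) ltac:(lra)). pose proof (V_lin c (13/12) ltac:(lra)).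
  pose proof (V_lin c y Hy) as HY.
  set (kp := hf (pt (c + 1) (exp 1)) - hf (pt (c + 1) 1)) in *.
  set (km := hf (pt (c - 1) (exp 1)) - hf (pt (c - 1) 1)) in *.
  set (k := hf (pt c (exp 1)) - hf (pt c 1)) in *.
  assert (L1 : ln (4/3) + ln (3/4) = 0) by (rewrite (ln_mult' (4/3) (3/4) 1); [apply ln_1|lra|lra|field]).
  assert (L2 : ln (12/5) + ln (5/12) = 0) by (rewrite (ln_mult' (12/5) (5/12) 1); [apply ln_1|lra|lra|field]).
  assert (L3 : ln (5/3) + ln (5/4) = ln (25/12)) by (apply ln_mult'; [lra|lra|field]).
  assert (L4 : ln (13/5) + ln (13/12) = ln (169/60)) by (apply ln_mult'; [lra|lra|field]).
  assert (Ln : ln (25/12) <> ln (169/60)).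
  { intro E. apply ln_inv in E; lra. }
  assert (Ln4 : ln (4/3) = - ln (3/4)) by lra.
  assert (Ln12 : ln (12/5) = - ln (5/12)) by lra.
  rewrite Ln4 in *. rewrite Ln12 in *.
  assert (K : k * (ln (25/12) - ln (169/60)) = 0).
  { rewrite <- L3, <- L4. lra. }
  apply Rmult_integral in K. destruct K as [K|K]; [|exfalso; apply Ln; lra].
  rewrite HY, K. ring.
Qed.

Definition kap (r : R) := hf (semi 0 r 1) - hf (semi 0 r 0).

Lemma semi_aff r q x : 0 < r -> 0 < q -> r * ((q * q - 1) / (q * q + 1)) = x ->
  hf (pt x 1) = hf (pt 0 1) + ln q * kap r.
Proof.
  intros Hr Hq Ex.
  pose proof (iso_curve S SC hf (semi 0 r) Hall Hgr (fun s s' => semi_iso 0 r s s' Hr) (ln q)) as H.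
  unfold kap.
  assert (A : semi 0 r (ln q) = pt x (2 * r * q / (q * q + 1))).
  { unfold semi. rewrite exp_ln by auto. apply pt_eq; lra. }
  assert (C : semi 0 r 0 = pt 0 r).
  { unfold semi. rewrite exp_0. apply pt_eq; field. }
  rewrite A in H. rewrite C in H |- *.
  rewrite (stepA x) in H by (apply Rdiv_lt_0_compat; nra).
  rewrite (stepA 0 r Hr) in H |- *. exact H.
Qed.

Lemma kap0 r : 0 < r -> kap r = 0.
Proof.
  intro Hr. set (R1 := 68 * r / 65).
  pose proof (semi_aff R1 2 (204 * r / 325) ltac:(unfold R1; lra) ltac:(lra) ltac:(unfold R1; field)) as A1.
  pose proof (semi_aff r (23/11) (204 * r / 325) Hr ltac:(lra) ltac:(field)) as A2.
  pose proof (semi_aff R1 4 (12 * r / 13) ltac:(unfold R1; lra) ltac:(lra) ltac:(unfold R1; field)) as A3.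
  pose proof (semi_aff r 5 (12 * r / 13) Hr ltac:(lra) ltac:(field)) as A4.
  assert (L4 : ln 4 = 2 * ln 2).
  { replace 4 with (2 * 2) by ring. rewrite ln_mult; lra. }
  assert (L23 : 2 * ln (23/11) = ln (529/121)).
  { replace (529/121) with (23/11 * (23/11)) by field. rewrite ln_mult; lra. }
  assert (Ln : ln (529/121) <> ln 5) by (intro E; apply ln_inv in E; lra).
  rewrite L4 in A3.
  assert (K : (ln (529/121) - ln 5) * kap r = 0).
  { rewrite <- L23. lra. }
  apply Rmult_integral in K. destruct K as [K|K]; auto. exfalso. apply Ln. lra.
Qed.

Lemma const_all : forall q, hf q = hf (pt 0 1).
Proof.
  intro q.
  assert (Eq : q = pt (hx q) (hy q)).
  { apply H2_ext; simpl; auto. rewrite posify_id; auto. apply hy_pos. }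
  rewrite Eq, stepA by apply hy_pos.
  set (x := hx q).
  destruct (Rlt_dec 0 x) as [Hx|Hx]; [|destruct (Req_dec x 0) as [Hx0|Hx0]].
  - rewrite (semi_aff (13 * x / 12) 5 x) by (try lra; field).
    rewrite kap0 by lra. ring.
  - rewrite Hx0. reflexivity.
  - rewrite (semi_aff (- 13 * x / 12) (/ 5) x) by (try lra; field).
    rewrite kap0 by lra. ring.
Qed.

End Const.

Theorem mainTheorem3 (S : H2R -> Prop) :
  totally_geodesic dH2R S -> nontrivial dH2R S ->
  (exists r : R, forall p : H2R, S p <-> snd p = r) \/
  (exists g : H2 -> Prop, is_geodesic dH g /\
     forall p : H2R, S p <-> g (fst p)).
Proof.
  intros [[x0 Sx0] Htg] [Hng Hnall].
  assert (SC : forall a b, S a -> S b -> a <> b -> forall t, S (Gam a b t)).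
  { intros a b Sa Sb Hab t. destruct (Htg a b Sa Sb) as [G [HG [Ga [Gb HGS]]]].
    apply HGS. apply (geo_line G a b); auto. }
  assert (Soth : forall a, S a -> exists b, S b /\ a <> b).
  { intros a Sa. destruct (Htg a a Sa Sa) as [G [HG [Ga [_ HGS]]]].
    destruct (geo_other G a HG Ga) as [b [Gb Hb]]. exists b. auto. }
  destruct (Soth x0 Sx0) as [y0 [Sy0 Hxy0]].
  assert (Tcl : lclosed (fun q => exists h, S (q, h))).
  { intros p r q [hp Sp] [hr Sr] Hpr Hc.
    apply (C1_closed S SC (p, hp) (r, hr) q); auto. }
  destruct (classic (exists q h h', S (q, h) /\ S (q, h') /\ h <> h')) as [NG|GR].
  -
    destruct NG as [q [h [h' [Sq [Sq' Hh]]]]].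
    assert (Fq : forall k, S (q, k)).
    { intro k. apply (C3_vertical S SC (q, h) (q, h')); auto.
      intro E. injection E. auto. }
    destruct (classic (exists a b c, S a /\ S b /\ S c /\ ~ col (fst a) (fst b) (fst c))) as [NC|AC].
    + exfalso. destruct NC as [a [b [c [Sa [Sb [Sc Hn]]]]]].
      set (U := fun w => forall k, S (w, k)).
      assert (Ucl : lclosed U).
      { intros p r w Up Ur Hpr Hc k.
        apply (C2_fiber S SC (r, 0) p Up (Ur 0)); auto. simpl. apply col_swap. auto. }
      assert (Tall : forall w, exists k, S (w, k)).
      { apply (triangle_lemma _ (fst a) (fst b) (fst c)); auto.
        exists (snd a). destruct a; auto. exists (snd b). destruct b; auto.
        exists (snd c). destruct c; auto. }
      assert (Uw : forall w, w <> q -> U w).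
      { intros w Hw k. destruct (Tall w) as [kw Sw].
        apply (C2_fiber S SC (w, kw) q Fq Sw); auto. simpl. unfold col. apply det_rep1'. }
      assert (Hab : fst a <> fst b).
      { intro E. apply Hn. unfold col. rewrite E. apply det_rep1. }
      set (r := if H2_dec (fst a) q then fst b else fst a).
      assert (Hrq : r <> q).
      { unfold r. destruct (H2_dec (fst a) q) as [E|E]; auto. rewrite <- E. auto. }
      assert (Hw3 : exists w3, ~ col q r w3 /\ (w3 = fst a \/ w3 = fst b \/ w3 = fst c)).
      { apply NNPP. intro K. apply Hn. apply (three_on_line q r); auto.
        - apply NNPP. intro K2. apply K. exists (fst a). auto.
        - apply NNPP. intro K2. apply K. exists (fst b). auto.
        - apply NNPP. intro K2. apply K. exists (fst c). auto. }
      destruct Hw3 as [w3 [Hw3 _]].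
      assert (Hw3q : w3 <> q) by (intro E; apply Hw3; rewrite E; unfold col; apply det_rep').
      assert (Uall : forall w, U w).
      { apply (triangle_lemma U q r w3); auto; apply Uw; auto. }
      apply Hnall. intros [w k]. apply Uall.
    +
      right.
      assert (AC' : forall a b c, S a -> S b -> S c -> col (fst a) (fst b) (fst c)).
      { intros a b c Sa Sb Sc. apply NNPP. intro K. apply AC. exists a, b, c. auto. }
      destruct (classic (exists z, S z /\ fst z <> q)) as [[z [Sz Hzq]]|Hall].
      * exists (col (fst z) q). split.
        { apply line_geodesic. auto. }
        intro P. split.
        -- intro SP. apply (AC' z (q, h) P); auto.
        -- intro Hc. destruct P as [w k]. simpl in Hc.
           apply (C2_fiber S SC z q Fq Sz Hzq w Hc).
      * exfalso. apply Hng. exists (fun t => (q, t)). split.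
        { intro t. exists 1. split. lra. intros s s' _ _.
          rewrite dH2R_eq. simpl. rewrite dH_self.
          replace (0 * 0 + (s - s') * (s - s')) with ((s - s') * (s - s')) by ring.
          apply sqrt_sq_abs. }
        intros [w k]. split.
        -- intro Sw. exists k. f_equal. apply NNPP. intro K. apply Hall. exists (w, k). auto.
        -- intros [t Et]. rewrite <- Et. apply Fq.
  -
    assert (Gr : forall q h h', S (q, h) -> S (q, h') -> h = h').
    { intros q h h' A B. apply NNPP. intro K. apply GR. exists q, h, h'. auto. }
    destruct (classic (exists a b c, S a /\ S b /\ S c /\ ~ col (fst a) (fst b) (fst c))) as [NC|AC].
    + left. destruct NC as [a [b [c [Sa [Sb [Sc Hn]]]]]].
      assert (Tall : forall w, exists k, S (w, k)).
      { apply (triangle_lemma _ (fst a) (fst b) (fst c)); auto.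
        exists (snd a). destruct a; auto. exists (snd b). destruct b; auto.
        exists (snd c). destruct c; auto. }
      set (hf := fun w => proj1_sig (constructive_indefinite_description _ (Tall w))).
      assert (Hall : forall w, S (w, hf w)).
      { intro w. unfold hf. destruct (constructive_indefinite_description _ (Tall w)). auto. }
      assert (Hgr : forall w k, S (w, k) -> k = hf w).
      { intros w k Sw. apply (Gr w); auto. }
      pose proof (const_all S SC hf Hall Hgr) as Hc.
      exists (hf (pt 0 1)). intros [w k]. simpl. split.
      * intro Sw. rewrite <- (Hc w). apply Hgr; auto.
      * intro E. rewrite E, <- (Hc w). apply Hall.
    + exfalso.
      assert (AC' : forall a b c, S a -> S b -> S c -> col (fst a) (fst b) (fst c)).
      { intros a b c Sa Sb Sc. apply NNPP. intro K. apply AC. exists a, b, c. auto. }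
      destruct (classic (exists z, S z /\ fst z <> fst x0)) as [[z [Sz Hz]]|Hall].
      * apply Hng. assert (Hne : x0 <> z) by (intro E; apply Hz; rewrite E; auto).
        pose proof (dH2R_pos x0 z Hne) as HD.
        destruct (Gam_geodesic x0 z HD) as [c [Hc Himg]].
        exists c. split; auto. intro w. rewrite <- Himg. split.
        -- intro Sw.
           assert (Cw : col (fst x0) (fst z) (fst w)) by (apply AC'; auto).
           assert (Hpz : fst x0 <> fst z) by auto.
           destruct (onto _ _ _ Hpz Cw) as [u Hu].
           set (t := u * dH2R x0 z / dH (fst x0) (fst z)).
           pose proof (dH_pos _ _ Hpz) as Hd.
           exists t.
           assert (F : fst (Gam x0 z t) = fst w).
           { unfold Gam. simpl. rewrite Hu. f_equal. unfold t. field. lra. }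
           assert (SG : S (Gam x0 z t)) by (apply SC; auto).
           destruct (Gam x0 z t) as [g1 g2]. destruct w as [w1 w2]. simpl in F. subst g1.
           f_equal. apply (Gr w1); auto.
        -- intros [t Et]. rewrite <- Et. apply SC; auto.
      * apply Hng.
        assert (Fy : fst y0 = fst x0) by (apply NNPP; intro K; apply Hall; exists y0; auto).
        pose proof (dH2R_pos x0 y0 Hxy0) as HD.
        destruct (Gam_geodesic x0 y0 HD) as [c [Hc Himg]].
        exists c. split; auto. intro w. rewrite <- Himg. split.
        -- intro Sw.
           assert (Fw : fst w = fst x0) by (apply NNPP; intro K; apply Hall; exists w; auto).
           assert (Hs : snd y0 - snd x0 <> 0).
           { intro E. apply Hxy0. destruct x0, y0; simpl in *. f_equal; auto. lra. }
           exists ((snd w - snd x0) * dH2R x0 y0 / (snd y0 - snd x0)).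
           unfold Gam. rewrite Fy, dH_self. destruct w as [w1 w2]. simpl in Fw. subst w1.
           f_equal.
           ++ replace (_ * 0 / dH2R x0 y0) with 0 by (field; lra). apply gam0.
           ++ simpl. field. split; lra.
        -- intros [t Et]. rewrite <- Et. apply SC; auto.
Qed.
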